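(* Let $A$ be a sesquiad. (a) $A$ is noetherian if and only if every ascending chain $C_1\subset C_2\subset\cdots$ of congruences on $A$ is eventually stationary. (b) If $A$ is noetherian and $\phi:A\to B$ is a surjective sesquiad morphism, then $B$ is noetherian. (c) Every finitely generated sesquiad is noetherian. (d) If $A$ is noetherian, then the topological space $\operatorname{spec}_cA$ is noetherian.
   Context: Monoids are commutative with $1$ and a zero $0$. A sesquiad is a monoid $A$ with an addition: partially defined sums $\sum_jk_ja_j$ coming from an injective monoid morphism $\varphi:A\to R$ into a commutative ring with $\varphi(0)=0$, defined exactly when $\sum_jk_j\varphi(a_j)\in\varphi(A)$; sesquiad morphisms are monoid morphisms preserving defined sums. A congruence is an equivalence relation $\mathcal C$ on $A$ such that $A/\mathcal C$ admits an addition making $A\to A/\mathcal C$ a sesquiad morphism. A congruence $C$ is finitely generated if there are $a,b\in A^n$ such that $C$ is the intersection of all congruences $E$ with $a_1\sim_Eb_1,\dots,a_n\sim_Eb_n$; $A$ is noetherian if every congruence is finitely generated. A sesquiad is finitely generated if it is the image of a surjective sesquiad morphism from the free monoid $\langle T_1,\dots,T_n\rangle$ (monomials in $T_1,\dots,T_n$ together with $0$, with trivial addition, i.e. only sums involving $0$ defined; its universal ring is $\mathbb Z[T_1,\dots,T_n]$). A prime congruence is one with $A/\mathcal C$ integral ($1\not\sim0$; $af\sim bf\Rightarrow a\sim b$ or $f\sim0$); $\operatorname{spec}_cA$ is the set of prime congruences with topology generated by $D(a,b)=\{\mathcal C:(a,b)\notin\mathcal C\}$. A topological space is noetherian if every descending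 chain of closed subsets stabilizes. *)

(* Defs.v *)
From Stdlib Require List.
From HB Require Import structures.
From mathcomp Require Import all_boot all_order all_algebra.
Set Implicit Arguments. Unset Strict Implicit. Unset Printing Implicit Defensive.
Import Order.TTheory GRing.Theory Num.Theory.
Local Open Scope ring_scope.

(** A formal Z-linear combination  sum_j k_j a_j  is a list of pairs (k_j, a_j).
    The "sum relation" [s l b] means: the sum [l] is defined and equals [b]. *)
Definition sumrel (A : Type) := seq (int * A) -> A -> Prop.

Definition is_sesquiad (A : Type) (mul : A -> A -> A) (one zero : A)
    (s : sumrel A) : Prop :=
  [/\ (forall x y, mul x y = mul y x),
      (forall x y z, mul x (mul y z) = mul (mul x y) z),
      (forall x, mul one x = x),
      (forall x, mul zero x = zero) &
      exists (R : comPzRingType) (phi : A -> R),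
        [/\ injective phi,
            (forall x y, phi (mul x y) = phi x * phi y),
            phi one = 1, phi zero = 0 &
            forall l b, s l b <-> \sum_(p <- l) (phi p.2 *~ p.1) = phi b]].

Record sesquiad := Sesquiad {
  sq_car :> Type;
  sq_mul : sq_car -> sq_car -> sq_car;
  sq_one : sq_car;
  sq_zero : sq_car;
  sq_sum : sumrel sq_car;
  sq_ax : is_sesquiad sq_mul sq_one sq_zero sq_sum }.

Definition is_morph_raw (A B : Type) (mulA : A -> A -> A) (oneA zeroA : A)
    (sA : sumrel A) (mulB : B -> B -> B) (oneB zeroB : B) (sB : sumrel B)
    (f : A -> B) : Prop :=
  [/\ (forall x y, f (mulA x y) = mulB (f x) (f y)),
      f oneA = oneB, f zeroA = zeroB &
      forall l b, sA l b -> sB [seq (p.1, f p.2) | p <- l] (f b)].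

Definition is_sq_morph (A B : sesquiad) (f : A -> B) : Prop :=
  is_morph_raw (@sq_mul A) (sq_one A) (sq_zero A) (@sq_sum A)
               (@sq_mul B) (sq_one B) (sq_zero B) (@sq_sum B) f.

Definition rel (A : Type) := A -> A -> Prop.

(** The quotient A/C is
    represented (up to isomorphism) by a sesquiad Q with a surjective morphism
    pi : A -> Q whose kernel relation is exactly C. *)
Definition is_congruence (A : sesquiad) (C : rel A) : Prop :=
  exists (Q : sesquiad) (pi : A -> Q),
    [/\ is_sq_morph pi, (forall q : Q, exists a, pi a = q) &
        forall a b, C a b <-> pi a = pi b].

Definition generated_by (A : sesquiad) (C : rel A) (g : seq (A * A)) : Prop :=
  forall x y, C x y <->
    (forall E : rel A, is_congruence E ->
       (forall p, List.In p g -> E p.1 p.2) -> E x y).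

Definition fg_congruence (A : sesquiad) (C : rel A) : Prop :=
  exists g : seq (A * A), generated_by C g.

Definition noetherian (A : sesquiad) : Prop :=
  forall C : rel A, is_congruence C -> fg_congruence C.

Definition acc_congruences (A : sesquiad) : Prop :=
  forall C : nat -> rel A,
    (forall n, is_congruence (C n)) ->
    (forall n x y, C n x y -> C n.+1 x y) ->
    exists N, forall n, (N <= n)%N -> forall x y, C n x y <-> C N x y.

(** The free monoid <T_1,...,T_n>: monomials (exponent vectors) plus 0 (None). *)
Definition free_car (n : nat) := option {ffun 'I_n -> nat}.
Definition free_mul (n : nat) (x y : free_car n) : free_car n :=
  match x, y with
  | Some m, Some m' => Some [ffun i => (m i + m' i)%N]
  | _, _ => None
  end.
Definition free_one (n : nat) : free_car n := Some [ffun => 0%N].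
Definition free_zero (n : nat) : free_car n := None.
(** Its addition, induced by the embedding into Z[T_1,...,T_n]
    (monomial |-> monomial, 0 |-> 0): sum_j k_j a_j = b holds iff for every
    monomial m, the coefficient of m on both sides agrees. *)
Definition free_sum (n : nat) : sumrel (free_car n) :=
  fun l b => forall m : {ffun 'I_n -> nat},
    \sum_(p <- l | p.2 == Some m) p.1 = ((b == Some m) : nat)%:Z.

Definition fg_sesquiad (A : sesquiad) : Prop :=
  exists (n : nat) (f : free_car n -> A),
    is_morph_raw (@free_mul n) (free_one n) (free_zero n) (@free_sum n)
                 (@sq_mul A) (sq_one A) (sq_zero A) (@sq_sum A) f
    /\ (forall a : A, exists x, f x = a).

Definition is_prime_congruence (A : sesquiad) (C : rel A) : Prop :=
  [/\ is_congruence C, ~ C (sq_one A) (sq_zero A) &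
      forall a b f, C (sq_mul a f) (sq_mul b f) -> C a b \/ C f (sq_zero A)].

(** Subsets of spec_c A are predicates on relations (only their values on
    prime congruences matter). *)
Definition specset (A : sesquiad) := rel A -> Prop.

Definition Dset (A : sesquiad) (a b : A) : specset A := fun C => ~ C a b.

(** Open sets of the topology generated by the sets D(a,b): every point of U
    lies in a finite intersection of D(a_i,b_i)'s contained in U. *)
Definition spec_open (A : sesquiad) (U : specset A) : Prop :=
  forall C, is_prime_congruence C -> U C ->
    exists g : seq (A * A),
      (forall p, List.In p g -> Dset p.1 p.2 C) /\
      (forall C', is_prime_congruence C' ->
         (forall p, List.In p g -> Dset p.1 p.2 C') -> U C').

Definition spec_closed (A : sesquiad) (Z : specset A) : Prop :=
  spec_open (fun C => ~ Z C).

Definition spec_noetherian (A : sesquiad) : Prop :=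
  forall Z : nat -> specset A,
    (forall n, spec_closed (Z n)) ->
    (forall n C, is_prime_congruence C -> Z n.+1 C -> Z n C) ->
    exists N, forall n, (N <= n)%N ->
      forall C, is_prime_congruence C -> (Z n C <-> Z N C).

(* Main.v *)
Require Import Defs.
From mathcomp Require Import all_boot all_order all_algebra.
From HB Require Import structures.
From Stdlib Require Import ClassicalEpsilon FunctionalExtensionality PropExtensionality Classical.
Import Defs.
Set Implicit Arguments. Unset Strict Implicit. Unset Printing Implicit Defensive.
Import Order.TTheory GRing.Theory Num.Theory.
Local Open Scope ring_scope.

Definition asb (P : Prop) : bool := if excluded_middle_informative P then true else false.
Lemma asbP (P : Prop) : reflect P (asb P).
Proof. rewrite /asb; case: excluded_middle_informative => h; constructor => //. Qed.

Section Quot.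
Variable R : comPzRingType.
Variables S I : R -> Prop.
Record qhyp : Prop := QHyp {
 qS1 : S 1;
 qSB : forall x y, S x -> S y -> S (x - y);
 qSM : forall x y, S x -> S y -> S (x * y);
 qIB : forall x y, I x -> I y -> I (x - y);
 qI0 : I 0;
 qIS : forall x, I x -> S x;
 qIM : forall x y, S x -> I y -> I (x * y)}.
Variable H : qhyp.
Let S1 := qS1 H.
Let SB := qSB H.
Let SM := qSM H.
Let IB := qIB H.
Let I0 := qI0 H.
Let IS := qIS H.
Let IM := qIM H.

Lemma subrSub (a b c : R) : (a - b) - (a - c) = c - b.
Proof. by rewrite opprB addrC addrA subrK. Qed.
Lemma S0 : S 0. Proof. by rewrite -(subrr 1); apply: SB. Qed.
Lemma SN x : S x -> S (- x). Proof. by move=> h; rewrite -sub0r; apply: SB => //; apply: S0. Qed.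
Lemma SD x y : S x -> S y -> S (x + y).
Proof. by move=> hx hy; rewrite -(opprK y); apply: SB => //; apply: SN. Qed.
Lemma IN x : I x -> I (- x). Proof. by move=> h; rewrite -sub0r; apply: IB. Qed.
Lemma ID x y : I x -> I y -> I (x + y).
Proof. by move=> hx hy; rewrite -(opprK y); apply: IB => //; apply: IN. Qed.

Definition canon (x : R) : R := epsilon (inhabits 0) (fun y => S y /\ I (x - y)).
Lemma canonP x : S x -> S (canon x) /\ I (x - canon x).
Proof. move=> hx; apply: (epsilon_spec (inhabits 0) (fun y => S y /\ I (x - y))).
by exists x; rewrite subrr. Qed.
Lemma canon_eq x y : I (x - y) -> canon x = canon y.
Proof.
move=> h; rewrite /canon; congr epsilon; apply: functional_extensionality => z.
apply: propositional_extensionality; split=> -[hz hi]; split=> //.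
  by have := IN (IB h hi); rewrite subrSub opprB.
by have := ID h hi; rewrite addrA subrK.
Qed.

Definition cn (x : R) := canon (if asb (S x) then x else 0).
Lemma cnS x : S (cn x).
Proof. rewrite /cn; case: asbP => h; first by case: (canonP h). by case: (canonP S0). Qed.
Lemma cnI x : S x -> I (x - cn x).
Proof. by move=> h; rewrite /cn; case: asbP => // h'; case: (canonP h). Qed.
Lemma cn_eq x y : S x -> S y -> I (x - y) -> cn x = cn y.
Proof. move=> hx hy h; rewrite /cn; do 2 (case: asbP => //= _); exact: canon_eq. Qed.
Lemma cn_eqE x y : S x -> S y -> cn x = cn y -> I (x - y).
Proof.
move=> hx hy e; have h1 := cnI hx; have h2 := cnI hy; rewrite e in h1.
by have := IB h1 h2; rewrite opprB addrA subrK.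
Qed.
Lemma cn_idem x : cn (cn x) = cn x.
Proof.
set y := if asb (S x) then x else 0.
have Sy : S y by rewrite /y; case: asbP => // _; exact: S0.
have -> : cn x = cn y by rewrite /cn /y; case: asbP => h //; case: asbP => //; case: asbP.
apply: (cn_eq (cnS _) Sy).
by have := IN (cnI Sy); rewrite opprB.
Qed.

Lemma Iresp x y : S x -> S y -> I (x - y) -> I (y - x).
Proof. by move=> _ _ h; have := IN h; rewrite opprB. Qed.
Lemma IaddE x x' y y' : I (x - x') -> I (y - y') -> I ((x + y) - (x' + y')).
Proof. by move=> h1 h2; rewrite opprD addrACA; apply: ID. Qed.
Lemma ImulE x x' y y' : S x -> S y' -> I (x - x') -> I (y - y') -> I ((x * y) - (x' * y')).
Proof.
move=> hx hy' h1 h2.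
have -> : x * y - x' * y' = x * (y - y') + (x - x') * y'.
  by rewrite mulrBr mulrBl addrA subrK.
by apply: ID; [apply: IM | rewrite mulrC; apply: IM].
Qed.

Definition qT' (_ : qhyp) := {x : R | cn x == x}.
Notation qT := (qT' H).
HB.instance Definition _ := Choice.on qT.
Definition q (x : R) : qT := exist _ (cn x) (introT eqP (cn_idem x)).
Lemma valq x : val (q x) = cn x. Proof. by []. Qed.
Lemma valS (a : qT) : S (val a).
Proof. by case: a => x /= /eqP <-; apply: cnS. Qed.
Lemma qval (a : qT) : q (val a) = a.
Proof. by apply: val_inj; rewrite valq; case: a => x /= /eqP. Qed.
Lemma q_eq x y : S x -> S y -> (q x = q y <-> I (x - y)).
Proof.
move=> hx hy; split => [e|h]; first by apply: cn_eqE => //; have := congr1 val e.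
by apply: val_inj; rewrite !valq; apply: cn_eq.
Qed.
Lemma qsurj (a : qT) : exists x, S x /\ a = q x.
Proof. by exists (val a); split; [apply: valS | rewrite qval]. Qed.
Lemma cnE x : S x -> I (cn x - x).
Proof. by move=> h; apply: Iresp (cnI h) => //; apply: cnS. Qed.

Definition addq (a b : qT) := q (val a + val b).
Definition oppq (a : qT) := q (- val a).
Definition mulq (a b : qT) := q (val a * val b).
Definition zeroq := q 0.
Definition oneq := q 1.

Hint Resolve S0 S1 SD SN SM SB cnS : core.

Lemma qD x y : S x -> S y -> addq (q x) (q y) = q (x + y).
Proof. move=> hx hy; apply/q_eq; rewrite ?valq; try by auto. by apply: IaddE; apply: cnE. Qed.
Lemma qN x : S x -> oppq (q x) = q (- x).
Proof. move=> hx; apply/q_eq; rewrite ?valq; try by auto. by rewrite -opprD; apply: IN; apply: cnE. Qed.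
Lemma qM x y : S x -> S y -> mulq (q x) (q y) = q (x * y).
Proof. move=> hx hy; apply/q_eq; rewrite ?valq; try by auto. by apply: ImulE => //; try apply: cnE; auto. Qed.

Lemma addqA : associative addq.
Proof.
move=> a b c; have [x [Sx ->]] := qsurj a; have [y [Sy ->]] := qsurj b.
have [z [Sz ->]] := qsurj c; by rewrite !qD ?addrA; auto.
Qed.
Lemma addqC : commutative addq.
Proof. move=> a b; have [x [Sx ->]] := qsurj a; have [y [Sy ->]] := qsurj b. by rewrite (qD Sx Sy) (qD Sy Sx) addrC. Qed.
Lemma add0q : left_id zeroq addq.
Proof. move=> a; have [x [Sx ->]] := qsurj a. by rewrite /zeroq qD ?add0r; auto. Qed.
Lemma addNq : left_inverse zeroq oppq addq.
Proof. move=> a; have [x [Sx ->]] := qsurj a. by rewrite qN ?qD ?addNr; auto. Qed.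
HB.instance Definition _ := GRing.isZmodule.Build qT addqA addqC add0q addNq.
Lemma mulqA : associative mulq.
Proof.
move=> a b c; have [x [Sx ->]] := qsurj a; have [y [Sy ->]] := qsurj b.
have [z [Sz ->]] := qsurj c; by rewrite !qM ?mulrA; auto.
Qed.
Lemma mulqC : commutative mulq.
Proof. move=> a b; have [x [Sx ->]] := qsurj a; have [y [Sy ->]] := qsurj b. by rewrite (qM Sx Sy) (qM Sy Sx) mulrC. Qed.
Lemma mul1q : left_id oneq mulq.
Proof. move=> a; have [x [Sx ->]] := qsurj a. by rewrite /oneq qM ?mul1r; auto. Qed.
Lemma mulqDl : left_distributive mulq (@GRing.add qT).
Proof.
move=> a b c; have [x [Sx ->]] := qsurj a; have [y [Sy ->]] := qsurj b.
have [z [Sz ->]] := qsurj c. rewrite /GRing.add /=.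
by rewrite !(qD, qM) ?mulrDl; auto.
Qed.
HB.instance Definition _ := GRing.Zmodule_isComPzRing.Build qT mulqA mulqC mul1q mulqDl.

Lemma qaddE x y : S x -> S y -> q (x + y) = q x + q y.
Proof. by move=> hx hy; rewrite -qD. Qed.
Lemma qmulE x y : S x -> S y -> q (x * y) = q x * q y.
Proof. by move=> hx hy; rewrite -qM. Qed.
Lemma qoneE : q 1 = 1. Proof. by []. Qed.
Lemma qzeroE : q 0 = 0. Proof. by []. Qed.
Lemma qoppE x : S x -> q (- x) = - q x.
Proof. by move=> hx; rewrite -qN. Qed.
Lemma qmulnE x n : S x -> q (x *+ n) = q x *+ n.
Proof.
move=> hx; elim: n => [|n ih]; first by rewrite !mulr0n.
have hn : S (x *+ n) by clear ih; elim: n => [|n ih]; rewrite ?mulr0n ?mulrS; auto.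
by rewrite !mulrS qaddE // ih.
Qed.
Lemma qmulzE x k : S x -> q (x *~ k) = q x *~ k.
Proof.
move=> hx; case: k => n; first exact: qmulnE.
have hn : S (x *+ n.+1) by elim: n.+1 => [|m ih]; rewrite ?mulr0n ?mulrS; auto.
by rewrite NegzE !mulrNz qoppE // qmulnE.
Qed.
End Quot.

Lemma sig_eqP (T : Type) (P : T -> Prop) (x y : {t : T | P t}) : proj1_sig x = proj1_sig y -> x = y.
Proof. case: x y => [x px] [y py] /= e; subst y; congr exist; apply: proof_irrelevance. Qed.

Section Kernel.
Variable A : sesquiad.
Variable T : comPzRingType.
Variable psi : A -> T.
Hypothesis psiM : forall x y, psi (sq_mul x y) = psi x * psi y.
Hypothesis psi1 : psi (sq_one A) = 1.
Hypothesis psi0 : psi (sq_zero A) = 0.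
Hypothesis psiS : forall l b, sq_sum l b -> \sum_(p <- l) (psi p.2 *~ p.1) = psi b.

Definition Kc := {t : T | exists a, t = psi a}.
Definition Kmul (x y : Kc) : Kc.
Proof. exists (proj1_sig x * proj1_sig y); case: x y => [x [a ea]] [y [b eb]] /=; exists (sq_mul a b); by rewrite psiM ea eb. Defined.
Definition Kone : Kc. Proof. exists 1; exists (sq_one A); by rewrite psi1. Defined.
Definition Kzero : Kc. Proof. exists 0; exists (sq_zero A); by rewrite psi0. Defined.
Definition Ksum : sumrel Kc := fun l b => \sum_(p <- l) (proj1_sig p.2 *~ p.1) = proj1_sig b.

Lemma Kax : is_sesquiad Kmul Kone Kzero Ksum.
Proof.
split.
- by move=> x y; apply: sig_eqP; rewrite /= mulrC.
- by move=> x y z; apply: sig_eqP; rewrite /= mulrA.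
- by move=> x; apply: sig_eqP; rewrite /= mul1r.
- by move=> x; apply: sig_eqP; rewrite /= mul0r.
exists T, (@proj1_sig T _); split => //.
by move=> x y; apply: sig_eqP.
Qed.

Definition Ksq : sesquiad := Sesquiad Kax.
Definition Kpi (a : A) : Ksq := exist _ (psi a) (ex_intro _ a erefl).

Lemma kernel_cong : is_congruence (fun x y => psi x = psi y).
Proof.
exists Ksq, Kpi; split.
- split.
  + by move=> x y; apply: sig_eqP; rewrite /= psiM.
  + by apply: sig_eqP.
  + by apply: sig_eqP.
  + move=> l b h; rewrite /sq_sum /= /Ksum big_map /=; exact: psiS.
- by move=> [t [a e]]; exists a; apply: sig_eqP; rewrite /= e.
- move=> a b; split => [e|e]; first by apply: sig_eqP.
  by have := congr1 (@proj1_sig _ _) e.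
Qed.
End Kernel.

Section Span.
Variable R : comPzRingType.
Inductive span (X : R -> Prop) : R -> Prop :=
| sp0 : span X 0
| spg x : X x -> span X x
| spadd x y : span X x -> span X y -> span X (x + y)
| spopp x : span X x -> span X (- x).

Lemma spsub X x y : span X x -> span X y -> span X (x - y).
Proof. by move=> hx hy; apply: spadd => //; apply: spopp. Qed.
Lemma spmono (X Y : R -> Prop) x : (forall z, X z -> Y z) -> span X x -> span Y x.
Proof.
move=> h; elim.
- exact: sp0.
- by move=> z /h; apply: spg.
- by move=> *; apply: spadd.
- by move=> *; apply: spopp.
Qed.
Lemma spind (X P : R -> Prop) : P 0 -> (forall x, X x -> P x) ->
  (forall x y, P x -> P y -> P (x + y)) -> (forall x, P x -> P (- x)) ->
  forall x, span X x -> P x.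
Proof.
move=> h0 hg ha hn x; elim=> [|z|z w _ ? _ ?|z _ ?].
- exact: h0.
- exact: hg.
- by apply: ha.
- by apply: hn.
Qed.
Lemma spmul (X Y Z : R -> Prop) x y : (forall u v, X u -> Y v -> span Z (u * v)) ->
  span X x -> span Y y -> span Z (x * y).
Proof.
move=> h hx hy; elim: hx.
- by rewrite mul0r; apply: sp0.
- move=> u Xu; elim: hy.
  + by rewrite mulr0; apply: sp0.
  + by move=> v Yv; apply: h.
  + by move=> v w _ h1 _ h2; rewrite mulrDr; apply: spadd.
  + by move=> v _ h1; rewrite mulrN; apply: spopp.
- by move=> u w _ h1 _ h2; rewrite mulrDl; apply: spadd.
- by move=> u _ h1; rewrite mulNr; apply: spopp.
Qed.
Lemma spmulz X x k : span X x -> span X (x *~ k).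
Proof.
move=> h.
have hn : forall n : nat, span X (x *+ n).
  elim=> [|m ih]; first by rewrite mulr0n; apply: sp0.
  by rewrite mulrS; apply: spadd.
case: k => n; first exact: hn.
by rewrite NegzE mulrNz; apply: spopp; apply: hn.
Qed.
End Span.

Section Alg.
Variable A : sesquiad.
Variable R : comPzRingType.
Variable phi : A -> R.
Hypothesis phi_inj : injective phi.
Hypothesis phiM : forall x y, phi (sq_mul x y) = phi x * phi y.
Hypothesis phi1 : phi (sq_one A) = 1.
Hypothesis phi0 : phi (sq_zero A) = 0.
Hypothesis phiS : forall l b, sq_sum l b <-> \sum_(p <- l) (phi p.2 *~ p.1) = phi b.

Definition SA := span (fun z => exists a, z = phi a).
Definition Igen (G : rel A) := span (fun z => exists c a b, G a b /\ z = phi c * (phi a - phi b)).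
Definition CG (G : rel A) : rel A := fun x y => Igen G (phi x - phi y).

Lemma SA_phi a : SA (phi a). Proof. by apply: spg; exists a. Qed.
Lemma SA1 : SA 1. Proof. by rewrite -phi1; apply: SA_phi. Qed.
Lemma SAB x y : SA x -> SA y -> SA (x - y). Proof. exact: spsub. Qed.
Lemma SAM x y : SA x -> SA y -> SA (x * y).
Proof. apply: spmul => _ _ [a ->] [b ->]; rewrite -phiM; apply: SA_phi. Qed.
Lemma IgenB G x y : Igen G x -> Igen G y -> Igen G (x - y). Proof. exact: spsub. Qed.
Lemma Igen0 G : Igen G 0. Proof. exact: sp0. Qed.
Lemma IgenS G x : Igen G x -> SA x.
Proof.
apply: spind; [exact: sp0 | | exact: spadd | exact: spopp].
move=> _ [c [a [b [_ ->]]]]; rewrite mulrBr -!phiM; apply: SAB; apply: SA_phi.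
Qed.
Lemma IgenM G x y : SA x -> Igen G y -> Igen G (x * y).
Proof.
apply: spmul => _ _ [d ->] [c [a [b [h ->]]]]; apply: spg; exists (sq_mul d c), a, b.
by rewrite phiM mulrA.
Qed.
Lemma Igen_mono (G H : rel A) x : (forall a b, G a b -> H a b) -> Igen G x -> Igen H x.
Proof. move=> h; apply: spmono => _ [c [a [b [hg ->]]]]; exists c, a, b; split; auto. Qed.

Lemma key (C : rel A) x y : is_congruence C -> Igen C (phi x - phi y) -> C x y.
Proof.
move=> [Q [pi [[piM pi1 pi0 piS] piS' ker]]] hI.
case: (sq_ax Q) => _ _ _ _ [RQ [phiQ [injQ phiQM phiQ1 phiQ0 phiQS]]].
pose psi a := phiQ (pi a).
have psiS l b : sq_sum l b -> \sum_(p <- l) (psi p.2 *~ p.1) = psi b.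
  by move=> /piS /phiQS; rewrite big_map.
have Cmul c a b : C a b -> C (sq_mul c a) (sq_mul c b).
  by move=> /ker e; apply/ker; rewrite !piM e.
have claim : forall z, Igen C z -> exists L : seq (int * A),
    z = \sum_(p <- L) (phi p.2 *~ p.1) /\ \sum_(p <- L) (psi p.2 *~ p.1) = 0.
  apply: spind.
  - by exists [::]; rewrite !big_nil.
  - move=> _ [c [a [b [hab ->]]]]; exists [:: (1, sq_mul c a); (-1, sq_mul c b)].
    rewrite !big_cons !big_nil /= !addr0 !mulr1z !mulrN1z mulrBr -!phiM; split => //.
    by rewrite /psi (proj1 (ker _ _) (Cmul c a b hab)) subrr.
  - move=> _ _ [L1 [-> e1]] [L2 [-> e2]]; exists (L1 ++ L2).
    by rewrite !big_cat /= e1 e2 addr0.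
  - move=> _ [L [-> e]]; exists [seq (- p.1, p.2) | p <- L]; rewrite !big_map /=.
    split.
      by rewrite -sumrN; apply: eq_bigr => p _; rewrite mulrNz.
    by rewrite (eq_bigr (fun p => - (psi p.2 *~ p.1))) ?sumrN ?e ?oppr0 // => p _; rewrite mulrNz.
have [L [e1 e2]] := claim _ hI.
have : sq_sum ((1, y) :: L) x by apply/phiS; rewrite big_cons /= -e1 mulr1z addrC subrK.
move/psiS; rewrite big_cons /= e2 addr0 mulr1z => /injQ e.
by apply/ker.
Qed.


Lemma cong_ext (C D : rel A) : (forall x y, C x y <-> D x y) -> is_congruence C -> is_congruence D.
Proof.
move=> e [Q [pi [h1 h2 h3]]]; exists Q, pi; split => // x y; rewrite -e; exact: h3.
Qed.

Lemma qhA G : qhyp SA (Igen G).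
Proof. split; [exact: SA1|exact: SAB|exact: SAM|exact: IgenB|exact: Igen0|exact: IgenS|exact: IgenM]. Qed.

Lemma CG_cong G : is_congruence (CG G).
Proof.
pose H := qhA G.
pose psi a := q H (phi a).
have := @kernel_cong A (qT' H) psi.
have e : forall x y, psi x = psi y <-> CG G x y.
  by move=> x y; rewrite /psi q_eq //; apply: SA_phi.
move=> h; apply: (cong_ext e); apply: h.
- by move=> x y; rewrite /psi phiM qmulE //; apply: SA_phi.
- by rewrite /psi phi1 qoneE.
- by rewrite /psi phi0 qzeroE.
- move=> l b /phiS; rewrite /psi => <-.
  elim: l => [|p l ih]; first by rewrite !big_nil qzeroE.
  rewrite !big_cons qaddE ?ih ?qmulzE //; try apply: spmulz; try apply: SA_phi.
  elim: l {ih} => [|p' l ih]; rewrite ?big_nil ?big_cons; [exact: sp0|].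
  by apply: spadd => //; apply: spmulz; apply: SA_phi.
Qed.

Lemma CG_ext (G : rel A) x y : G x y -> CG G x y.
Proof. by move=> h; apply: spg; exists (sq_one A), x, y; rewrite phi1 mul1r. Qed.

Lemma CG_least (G E : rel A) x y : is_congruence E -> (forall a b, G a b -> E a b) -> CG G x y -> E x y.
Proof. by move=> hE hGE h; apply: key => //; apply: Igen_mono h. Qed.

Lemma cong_CG (C : rel A) x y : is_congruence C -> (C x y <-> CG C x y).
Proof. by move=> hC; split; [apply: CG_ext | apply: key]. Qed.

Lemma CG_generated (g : seq (A * A)) : generated_by (CG (fun a b => List.In (a, b) g)) g.
Proof.
move=> x y; split.
  by move=> h E hE hg; apply: (CG_least hE) h => a b /hg.
move=> h; apply: h; first exact: CG_cong.
by move=> [a b] hp; apply: CG_ext.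
Qed.

Lemma chain_mono (C : nat -> rel A) : (forall n x y, C n x y -> C n.+1 x y) ->
  forall n m x y, (n <= m)%N -> C n x y -> C m x y.
Proof.
move=> h n m x y; elim: m => [|m ih]; first by rewrite leqn0 => /eqP ->.
rewrite leq_eqVlt => /orP [/eqP -> //|]; rewrite ltnS => /ih hc /hc; exact: h.
Qed.

Lemma noeth_acc : noetherian A -> acc_congruences A.
Proof.
move=> hN C hc hm.
pose U : rel A := fun x y => exists n, C n x y.
have hI : forall z, Igen U z -> exists n, Igen (C n) z.
  apply: spind.
  - by exists 0%N; apply: sp0.
  - move=> _ [c [a [b [[n hn] ->]]]]; exists n; apply: spg; exists c, a, b; split=> //.
  - move=> x y [n1 h1] [n2 h2]; exists (maxn n1 n2); apply: spadd.
      by apply: Igen_mono h1 => a b; apply: chain_mono => //; apply: leq_maxl.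
    by apply: Igen_mono h2 => a b; apply: chain_mono => //; apply: leq_maxr.
  - by move=> x [n h]; exists n; apply: spopp.
have eU : forall x y, CG U x y <-> U x y.
  move=> x y; split; last exact: CG_ext.
  by move=> /hI [n h]; exists n; apply: key (hc n) h.
have [g hg] := hN U (cong_ext eU (CG_cong U)).
have hUg : forall p, List.In p g -> U p.1 p.2.
  by move=> p hp; apply/hg => E hE hgE; apply: hgE.
have [N hN'] : exists N, forall p, List.In p g -> C N p.1 p.2.
  elim: g {hg} hUg => [|p g ih] hUg; first by exists 0%N.
  have [n hn] := hUg p (or_introl erefl).
  have [N hN'] := ih (fun p' hp' => hUg p' (or_intror hp')).
  exists (maxn n N) => p' [<-|hp'].
    by apply: chain_mono hn => //; apply: leq_maxl.
  by apply: chain_mono (hN' _ hp') => //; apply: leq_maxr.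
exists N => n hn x y; split; last exact: chain_mono.
move=> h; have : U x y by exists n.
by move/hg; apply => //; apply: hc.
Qed.

Lemma acc_noeth : acc_congruences A -> noetherian A.
Proof.
move=> hacc C hC; apply: NNPP => hnot.
have ex : forall g : seq (A * A), (forall a b, List.In (a, b) g -> C a b) ->
    exists p : A * A, C p.1 p.2 /\ ~ CG (fun a b => List.In (a, b) g) p.1 p.2.
  move=> g hg; apply: NNPP => hno; apply: hnot; exists g => x y.
  rewrite -(CG_generated g x y); split.
    move=> hxy; apply: NNPP => hc; apply: hno; by exists (x, y).
  by apply: CG_least.
pose P (g : seq (A * A)) (p : A * A) := C p.1 p.2 /\ ~ CG (fun a b => List.In (a, b) g) p.1 p.2.
pose ch g := epsilon (inhabits (sq_one A, sq_one A)) (P g).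
pose nxt g := g ++ [:: ch g].
pose gs k := iter k nxt [::].
have gsC : forall k a b, List.In (a, b) (gs k) -> C a b.
  elim=> [|k ih] a b; first by [].
  move=> h; case: (List.in_app_or _ _ _ h) => [h'|[e|//]]; first exact: ih h'.
  have := epsilon_spec (inhabits (sq_one A, sq_one A)) (P (gs k)) (ex _ ih).
  by rewrite -/(ch (gs k)) e => -[].
pose D k := CG (fun a b => List.In (a, b) (gs k)).
have [N hN] := hacc D (fun k => CG_cong _) (fun k x y => Igen_mono (fun a b h => List.in_or_app _ _ _ (or_introl h))).
have := epsilon_spec (inhabits (sq_one A, sq_one A)) (P (gs N)) (ex _ (gsC N)).
rewrite -/(ch (gs N)) => -[_]; apply; apply/(hN N.+1 (leqnSn N)).
apply: CG_ext; apply: List.in_or_app; right; case: (ch (gs N)) => a b; by left.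
Qed.


Definition V (C : rel A) : specset A := fun P => forall x y, C x y -> P x y.
Definition prime := @is_prime_congruence A.

Lemma cl_V C : spec_closed (V C).
Proof.
move=> P hP hV; have [x [y [hxy hn]]] : exists x y, C x y /\ ~ P x y.
  apply: NNPP => hno; apply: hV => x y hxy; apply: NNPP => hn; apply: hno; by exists x, y.
exists [:: (x, y)]; split; first by move=> p [<-|//].
move=> P' _ hD hV'; apply: (hD (x, y) (or_introl erefl)); exact: hV'.
Qed.

Lemma cl_inter (Z1 Z2 : specset A) : spec_closed Z1 -> spec_closed Z2 -> spec_closed (fun P => Z1 P /\ Z2 P).
Proof.
move=> h1 h2 P hP hn; case: (classic (Z1 P)) => hz1.
  have hz2 : ~ Z2 P by move=> hz2; apply: hn.
  have [g [hg1 hg2]] := h2 P hP hz2; exists g; split => // P' hP' hD [_ ?]; exact: (hg2 P' hP' hD).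
have [g [hg1 hg2]] := h1 P hP hz1; exists g; split => // P' hP' hD [? _]; exact: (hg2 P' hP' hD).
Qed.

Lemma cl_union (Z1 Z2 : specset A) : spec_closed Z1 -> spec_closed Z2 -> spec_closed (fun P => Z1 P \/ Z2 P).
Proof.
move=> h1 h2 P hP hn.
have [g1 [hg1 hg1']] := h1 P hP (fun h => hn (or_introl h)).
have [g2 [hg2 hg2']] := h2 P hP (fun h => hn (or_intror h)).
exists (g1 ++ g2); split.
  by move=> p hp; case: (List.in_app_or _ _ _ hp) => ?; [apply: hg1|apply: hg2].
move=> P' hP' hD [].
  by apply: hg1' => // p hp; apply: hD; apply: List.in_or_app; left.
by apply: hg2' => // p hp; apply: hD; apply: List.in_or_app; right.
Qed.

Lemma cl_empty : @spec_closed A (fun _ : rel A => False).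
Proof. by move=> P hP _; exists [::]; split => // P' _ _ []. Qed.

Lemma cl_ext (Z Z' : specset A) : (forall P, prime P -> (Z P <-> Z' P)) -> spec_closed Z -> spec_closed Z'.
Proof.
move=> e h P hP hn; have [g [hg1 hg2]] := h P hP (fun z => hn (proj1 (e P hP) z)).
exists g; split => // P' hP' hD z; apply: (hg2 P' hP' hD); exact: (proj2 (e P' hP') z).
Qed.

Lemma cl_up (Z : specset A) P P' : spec_closed Z -> prime P -> Z P -> prime P' ->
  (forall x y, P x y -> P' x y) -> Z P'.
Proof.
move=> hZ hP hz hP' sub; apply: NNPP => hn.
have [g [hg1 hg2]] := hZ P' hP' hn; apply: (hg2 P hP) => // p hp hPp.
by apply: (hg1 p hp); apply: sub.
Qed.

Definition stab (Z : nat -> specset A) :=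
  exists N, forall n, (N <= n)%N -> forall P, prime P -> (Z n P <-> Z N P).

Definition desc (Z : nat -> specset A) := forall n P, prime P -> Z n.+1 P -> Z n P.

Lemma desc_le Z : desc Z -> forall n m P, prime P -> (n <= m)%N -> Z m P -> Z n P.
Proof.
move=> h n m P hP; elim: m => [|m ih]; first by rewrite leqn0 => /eqP ->.
rewrite leq_eqVlt => /orP [/eqP -> //|]; rewrite ltnS => hnm hz; apply: ih => //; exact: h.
Qed.

Lemma union_stab (Z Z1 Z2 : nat -> specset A) :
  (forall n P, prime P -> (Z n P <-> Z1 n P \/ Z2 n P)) -> desc Z1 -> desc Z2 ->
  stab Z1 -> stab Z2 -> stab Z.
Proof.
move=> e d1 d2 [N1 h1] [N2 h2]; exists (maxn N1 N2) => n hn P hP.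
have hn1 : (N1 <= n)%N by apply: leq_trans hn; apply: leq_maxl.
have hn2 : (N2 <= n)%N by apply: leq_trans hn; apply: leq_maxr.
rewrite !e // (h1 n hn1 P hP) (h2 n hn2 P hP) (h1 (maxn N1 N2) (leq_maxl _ _) P hP).
by rewrite (h2 (maxn N1 N2) (leq_maxr _ _) P hP).
Qed.

Lemma shift_stab (Z : nat -> specset A) N0 : desc Z -> stab (fun n => Z (N0 + n)%N) -> stab Z.
Proof.
move=> d [N h]; exists (N0 + N)%N => n hn P hP.
have := h (n - N0)%N; rewrite subnKC; last by apply: leq_trans hn; apply: leq_addr.
apply => //; by rewrite leq_subRL // ?(leq_trans _ hn) ?leq_addr.
Qed.

Definition Good (C : rel A) := forall Z : nat -> specset A,
  (forall n, spec_closed (Z n)) -> desc Z ->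
  (forall n P, prime P -> Z n P -> V C P) -> stab Z.

Definition sabove (C C' : rel A) := (forall x y, C x y -> C' x y) /\ exists x y, C' x y /\ ~ C x y.

Definition join (C : rel A) (p : A * A) : rel A := CG (fun a b => C a b \/ (a = p.1 /\ b = p.2)).

Lemma join_cong C p : is_congruence (join C p). Proof. exact: CG_cong. Qed.
Lemma join_above C p : ~ C p.1 p.2 -> sabove C (join C p).
Proof.
move=> hn; split; first by move=> x y h; apply: CG_ext; left.
by exists p.1, p.2; split => //; apply: CG_ext; right.
Qed.
Lemma join_V C p P : prime P -> V C P -> P p.1 p.2 -> V (join C p) P.
Proof.
move=> [hP _ _] hV hp x y; apply: (CG_least hP) => a b [/hV //|[-> ->]] //.
Qed.
Lemma V_join C p P : V (join C p) P -> V C P.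
Proof. by move=> h x y hxy; apply: h; apply: CG_ext; left. Qed.

Lemma list_stab (C : rel A) (g : seq (A * A)) :
  (forall p, List.In p g -> Good (join C p)) ->
  forall Z : nat -> specset A, (forall n, spec_closed (Z n)) -> desc Z ->
  (forall n P, prime P -> Z n P -> V C P /\ exists p, List.In p g /\ V (join C p) P) -> stab Z.
Proof.
elim: g => [|p g ih] hG Z hc hd hZ.
  exists 0%N => n _ P hP; split => h; by case: (hZ _ P hP h) => _ [p' [[]]].
pose Z1 n P := Z n P /\ V (join C p) P.
pose Z2 n P := Z n P /\ exists q, List.In q g /\ V (join C q) P.
have clU : forall g' : seq (A * A), spec_closed (fun P => exists q, List.In q g' /\ V (join C q) P).
  elim=> [|q g' ihg].
    by refine (cl_ext _ cl_empty) => P _; split => // -[q [[]]].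
  refine (cl_ext _ (cl_union (@cl_V (join C q)) ihg)) => P _; split.
    by case=> [h|[q' [h1 h2]]]; [exists q; split => //; left | exists q'; split => //; right].
  by case=> q' [[<-|h1] h2]; [left | right; exists q'].
apply: (union_stab (Z1 := Z1) (Z2 := Z2)).
- move=> n P hP; split.
    move=> hz; case: (hZ n P hP hz) => _ [q [[<-|hq] hV]]; first by left.
    by right; split => //; exists q.
  by case=> -[].
- by move=> n P hP [h1 h2]; split => //; apply: hd.
- by move=> n P hP [h1 h2]; split => //; apply: hd.
- apply: (hG p (or_introl erefl)).
  + by move=> n; apply: cl_inter => //; apply: cl_V.
  + by move=> n P hP [h1 h2]; split => //; apply: hd.
  + by move=> n P hP [_ h]; apply: h.
- apply: ih.
  + by move=> q hq; apply: hG; right.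
  + by move=> n; apply: cl_inter.
  + by move=> n P hP [h1 h2]; split => //; apply: hd.
  + by move=> n P hP [h1 h2]; split => //; case: (hZ n P hP h1).
Qed.

Lemma good_step C : is_congruence C -> (forall C', is_congruence C' -> sabove C C' -> Good C') -> Good C.
Proof.
move=> hC IH Z hc hd hZ.
case: (classic (C (sq_one A) (sq_zero A))) => h10.
  exists 0%N => n _ P hP; split => hz; case: (hP) => _ hn _; by exfalso; apply: hn; apply: (hZ _ P hP hz).
case: (classic (exists a b f, C (sq_mul a f) (sq_mul b f) /\ ~ C a b /\ ~ C f (sq_zero A))).
  move=> [a [b [f [hab [hnab hnf]]]]].
  pose p1 := (a, b); pose p2 := (f, sq_zero A).
  pose Z1 n P := Z n P /\ V (join C p1) P.
  pose Z2 n P := Z n P /\ V (join C p2) P.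
  apply: (union_stab (Z1 := Z1) (Z2 := Z2)).
  - move=> n P hP; split; last by case=> -[].
    move=> hz; have hV := hZ n P hP hz; case: (hP) => _ _ pr.
    case: (pr a b f (hV _ _ hab)) => hp; [left | right]; split => //; exact: join_V.
  - by move=> n P hP [h1 h2]; split => //; apply: hd.
  - by move=> n P hP [h1 h2]; split => //; apply: hd.
  - refine (IH _ (join_cong C p1) (@join_above C p1 hnab) Z1 _ _ _).
    + by move=> n; apply: cl_inter => //; apply: cl_V.
    + by move=> n P hP [h1 h2]; split => //; apply: hd.
    + by move=> n P hP [_ h].
  - refine (IH _ (join_cong C p2) (@join_above C p2 hnf) Z2 _ _ _).
    + by move=> n; apply: cl_inter => //; apply: cl_V.
    + by move=> n P hP [h1 h2]; split => //; apply: hd.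
    + by move=> n P hP [_ h].
move=> hnp.
have hCp : prime C.
  split => // a b f hab; apply: NNPP => hn; apply: hnp; exists a, b, f; split => //.
  by split => h; apply: hn; [left|right].
case: (classic (forall n, Z n C)) => hall.
  exists 0%N => n _ P hP; split => hz.
    apply: (cl_up (hc 0%N) hCp (hall 0%N) hP); exact: hZ hz.
  apply: (cl_up (hc n) hCp (hall n) hP); exact: hZ hz.
have [N hN] : exists N, ~ Z N C by apply: NNPP => h; apply: hall => n; apply: NNPP => hn; apply: h; exists n.
have [g [hg1 hg2]] := hc N C hCp hN.
apply: (shift_stab (N0 := N)) => //.
apply: (list_stab (C := C) (g := g)).
- by move=> p hp; apply: IH; [apply: join_cong | apply: join_above; apply: hg1].
- by move=> n; apply: hc.
- by move=> n P hP; rewrite addnS; apply: hd.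
- move=> n P hP hz; have hV := hZ _ P hP hz; split => //.
  have hzN : Z N P by apply: (desc_le hd hP _ hz); apply: leq_addr.
  apply: NNPP => hno; apply: (hg2 P hP) hzN => p hp hPp; apply: hno; exists p; split => //.
  exact: join_V.
Qed.

Lemma all_good : acc_congruences A -> forall C, is_congruence C -> Good C.
Proof.
move=> hacc C0 hC0; apply: NNPP => hbad.
have ex : forall C, is_congruence C -> ~ Good C -> exists C', is_congruence C' /\ sabove C C' /\ ~ Good C'.
  move=> C hC hn; apply: NNPP => hno; apply: hn; apply: good_step => // C' hC' hs.
  apply: NNPP => hg; apply: hno; by exists C'.
pose Pn (C C' : rel A) := is_congruence C' /\ sabove C C' /\ ~ Good C'.
pose nxt C := epsilon (inhabits C0) (Pn C).
pose ch n := iter n nxt C0.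
have inv : forall n, is_congruence (ch n) /\ ~ Good (ch n).
  elim=> [|n [ih1 ih2]] //=.
  have [h1 [_ h2]] := epsilon_spec (inhabits C0) (Pn (ch n)) (ex _ ih1 ih2); by split.
have up : forall n, sabove (ch n) (ch n.+1).
  move=> n; have [ih1 ih2] := inv n.
  by have [_ [h _]] := epsilon_spec (inhabits C0) (Pn (ch n)) (ex _ ih1 ih2).
have [N hN] := hacc ch (fun n => (inv n).1) (fun n => (up n).1).
have [_ [x [y [h1 h2]]]] := up N; apply: h2; exact: (proj1 (hN N.+1 (leqnSn N) x y) h1).
Qed.

Lemma noeth_spec : acc_congruences A -> spec_noetherian A.
Proof.
move=> hacc Z hc hd.
have := all_good hacc (CG_cong (fun _ _ => False)); apply => //.
move=> n P [hP _ _] _ x y; apply: (CG_least hP) => a b [].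
Qed.
End Alg.

Lemma noeth_iff (A : sesquiad) : noetherian A <-> acc_congruences A.
Proof.
case: (sq_ax A) => _ _ _ _ [R [phi [pinj pM p1 p0 pS]]].
split; [exact: (noeth_acc pM p1 p0 pS) | exact: (acc_noeth pM p1 p0 pS)].
Qed.

Lemma image_noeth (A B : sesquiad) (f : A -> B) :
  noetherian A -> is_sq_morph f -> (forall b : B, exists a, f a = b) -> noetherian B.
Proof.
move=> /noeth_iff hA [fM f1 f0 fS] fsurj; apply/noeth_iff => D hD hm.
pose C n x y := D n (f x) (f y).
have hC : forall n, is_congruence (C n).
  move=> n; have [Q [pi [[piM pi1 pi0 piS] pis ker]]] := hD n.
  exists Q, (fun a => pi (f a)); split.
  - split.
    + by move=> x y; rewrite fM piM.
    + by rewrite f1 pi1.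
    + by rewrite f0 pi0.
    + move=> l b /fS /piS; by rewrite -map_comp.
  - by move=> q; have [b <-] := pis q; have [a <-] := fsurj b; exists a.
  - by move=> x y; apply: ker.
have [N hN] := hA C hC (fun n x y => hm n (f x) (f y)).
exists N => n hn b b'; have [x <-] := fsurj b; have [y <-] := fsurj b'; exact: hN.
Qed.

Definition ideal (T : comPzRingType) (J : T -> Prop) :=
  [/\ J 0, (forall x y, J x -> J y -> J (x + y)) & (forall x y, J y -> J (x * y))].
Definition racc (T : comPzRingType) := forall J : nat -> T -> Prop,
  (forall n, ideal (J n)) -> (forall n x, J n x -> J n.+1 x) ->
  exists N, forall n, (N <= n)%N -> forall x, J n x -> J N x.

Lemma ideal_sub (T : comPzRingType) (J : T -> Prop) x y : ideal J -> J x -> J y -> J (x - y).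
Proof. by move=> [h0 hD hM] hx hy; apply: hD => //; rewrite -mulN1r; apply: hM. Qed.

Lemma chain_le (T : Type) (J : nat -> T -> Prop) : (forall n x, J n x -> J n.+1 x) ->
  forall n m x, (n <= m)%N -> J n x -> J m x.
Proof.
move=> h n m x; elim: m => [|m ih]; first by rewrite leqn0 => /eqP ->.
rewrite leq_eqVlt => /orP [/eqP -> //|]; rewrite ltnS => /ih hc /hc; exact: h.
Qed.

Section Hilbert.
Variable T : comNzRingType.
Definition L (J : {poly T} -> Prop) (d : nat) (c : T) :=
  exists p, J p /\ (size p <= d.+1)%N /\ p`_d = c.

Lemma L_ideal J d : ideal J -> ideal (L J d).
Proof.
move=> [h0 hD hM]; split.
- by exists 0; rewrite size_poly0 coef0.
- move=> _ _ [p [hp [sp <-]]] [q [hq [sq <-]]]; exists (p + q); split; first exact: hD.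
  split; last by rewrite coefD.
  by apply: leq_trans (size_polyD _ _) _; rewrite geq_max sp sq.
- move=> r _ [p [hp [sp <-]]]; exists (r%:P * p); split; first exact: hM.
  rewrite mul_polyC coefZ; split => //; exact: leq_trans (size_scale_leq _ _) sp.
Qed.

Lemma L_mono_d J d c : ideal J -> L J d c -> L J d.+1 c.
Proof.
move=> [h0 hD hM] [p [hp [sp <-]]]; exists (p * 'X); split.
  by rewrite mulrC; apply: hM.
rewrite coefMX /=; split => //.
apply: leq_trans (size_polyMleq _ _) _; rewrite size_polyX addn2 /=; by rewrite ltnS.
Qed.

Lemma L_mono_J (J J' : {poly T} -> Prop) d c : (forall x, J x -> J' x) -> L J d c -> L J' d c.
Proof. by move=> h [p [hp hs]]; exists p; split => //; apply: h. Qed.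

Lemma size_drop (r : {poly T}) d : (size r <= d.+1)%N -> r`_d = 0 -> (size r <= d)%N.
Proof.
move=> hs hc; rewrite leq_eqVlt ltnS in hs; case/orP: hs => [/eqP e|//].
have : lead_coef r = 0 by rewrite lead_coefE e.
by move/eqP; rewrite lead_coef_eq0 => /eqP ->; rewrite size_poly0.
Qed.

Lemma L_det (J J' : {poly T} -> Prop) : ideal J -> ideal J' -> (forall x, J x -> J' x) ->
  (forall d c, L J' d c -> L J d c) -> forall p, J' p -> J p.
Proof.
move=> hJ hJ' sub hL p; have [h0 _ _] := hJ.
move: {2}(size p) (leqnn (size p)) => n; elim: n p => [|d ih] p hs hp.
  by move: hs; rewrite leqn0 size_poly_eq0 => /eqP ->.
have [q [hq [sq eq]]] := hL d p`_d (ex_intro _ p (conj hp (conj hs erefl))).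
have -> : p = (p - q) + q by rewrite subrK.
have [_ hD _] := hJ; apply: hD => //; apply: ih.
  apply: size_drop; last by rewrite coefB eq subrr.
  by apply: leq_trans (size_polyD _ _) _; rewrite size_polyN geq_max hs sq.
by apply: ideal_sub => //; apply: sub.
Qed.

Lemma racc_poly : racc T -> racc {poly T}.
Proof.
move=> hT J hJ hm.
have hmle := chain_le hm.
have Lmono : forall d d' k k' c, (d <= d')%N -> (k <= k')%N -> L (J k) d c -> L (J k') d' c.
  move=> d d' k k' c hd hk h; apply: (L_mono_J (J := J k)); first by move=> x; apply: hmle.
  elim: d' hd => [|d' ih]; first by rewrite leqn0 => /eqP <-.
  rewrite leq_eqVlt => /orP [/eqP <- //|]; rewrite ltnS => /ih; exact: L_mono_d.
have [N0 hN0] := hT (fun d => L (J d) d) (fun d => L_ideal d (hJ d))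
  (fun d c h => Lmono d d.+1 d d.+1 c (leqnSn d) (leqnSn d) h).
have [K hK] : exists K, forall d, (d < N0)%N -> forall k, (K <= k)%N -> forall c, L (J k) d c -> L (J K) d c.
  elim: N0 {hN0} => [|m [K ih]]; first by exists 0%N.
  have [Km hKm] := hT (fun k => L (J k) m) (fun k => L_ideal m (hJ k))
    (fun k c h => Lmono m m k k.+1 c (leqnn m) (leqnSn k) h).
  exists (maxn K Km) => d; rewrite ltnS leq_eqVlt => /orP [/eqP ->|hd] k hk c h.
    apply: (Lmono m m Km) => //; first by apply: leq_maxr.
    by apply: (hKm k) => //; apply: leq_trans hk; apply: leq_maxr.
  apply: (Lmono d d K) => //; first by apply: leq_maxl.
  by apply: (ih d hd k) => //; apply: leq_trans hk; apply: leq_maxl.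
exists (maxn N0 K) => n hn.
apply: L_det; [exact: hJ | exact: hJ | by move=> x; apply: hmle | ].
move=> d c h; case: (ltnP d N0) => hd.
  apply: (Lmono d d K) => //; first by apply: leq_maxr.
  by apply: (hK d hd n) => //; apply: leq_trans hn; apply: leq_maxr.
have h1 : L (J (maxn d n)) (maxn d n) c by apply: (Lmono d _ n) => //; [apply: leq_maxl|apply: leq_maxr].
have h2 := hN0 (maxn d n) (leq_trans hd (leq_maxl _ _)) c h1.
apply: (Lmono N0 d N0) => //; apply: leq_maxl.
Qed.
End Hilbert.

Lemma racc_int : racc int.
Proof.
move=> J hJ hm; have hmle := chain_le hm.
pose U x := exists n, J n x.
have hU : ideal U.
  split.
  - by exists 0%N; case: (hJ 0%N).
  - move=> x y [n hx] [m hy]; exists (maxn n m); case: (hJ (maxn n m)) => _ hD _; apply: hD.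
      by apply: hmle hx; apply: leq_maxl.
    by apply: hmle hy; apply: leq_maxr.
  - by move=> x y [n hy]; exists n; case: (hJ n) => _ _ hM; apply: hM.
case: (classic (exists x, U x /\ x != 0)) => [hex|hno]; last first.
  exists 0%N => n _ x hx; have -> : x = 0.
    by apply/eqP; apply: NNPP => hx0; apply: hno; exists x; split; [exists n | apply/negP].
  by case: (hJ 0%N).
pose P m := asb (exists x, U x /\ x != 0 /\ `|x|%N = m).
have exP : exists m, P m.
  by case: hex => x [hx hx0]; exists `|x|%N; apply/asbP; exists x.
case: (ex_minnP exP) => m /asbP [d [[N hdN] [hd0 hdm]]] hmin.
exists N => n hn x hx.
have hr : U (x %% d)%Z.
  have -> : (x %% d)%Z = x - (x %/ d)%Z * d by rewrite {2}(divz_eq x d) addrC addKr.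
  by apply: ideal_sub => //; [exists n | case: hU => _ _ hM; apply: hM; exists N].
have hr0 : (x %% d)%Z = 0.
  apply/eqP; apply: NNPP => hne.
  have hP : P `|(x %% d)%Z|%N by apply/asbP; exists (x %% d)%Z; split => //; split; [apply/negP|].
  have := hmin _ hP; rewrite -hdm leqNgt => /negP; apply.
  rewrite -ltz_nat !abszE ger0_norm ?modz_ge0 //; exact: ltz_mod.
rewrite (divz_eq x d) hr0 addr0; case: (hJ N) => _ _ hM; exact: hM.
Qed.

Fixpoint MP (n : nat) : comNzRingType := if n is k.+1 then {poly MP k} else int.

Lemma racc_MP n : racc (MP n).
Proof. elim: n => [|n ih]; [exact: racc_int | exact: racc_poly]. Qed.

Section NZ.
Variable R : comPzRingType.
Definition nzR' (_ : (1:R) != 0) : Type := R.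
Variable h : (1:R) != 0.
HB.instance Definition _ := GRing.ComPzRing.on (nzR' h).
HB.instance Definition _ := GRing.PzSemiRing_isNonZero.Build (nzR' h) h.
End NZ.

Section Ev.
Variable R : comNzRingType.
Variable v : nat -> R.
Fixpoint ev (n : nat) : {rmorphism MP n -> R} :=
  match n return {rmorphism MP n -> R} with
  | 0 => ((intr : int -> R) : {rmorphism int -> R})
  | k.+1 => horner_morph (fun x => mulrC (v k) (ev k x))
  end.
Fixpoint var (k i : nat) : MP k :=
  match k return MP k with
  | 0 => 0
  | k'.+1 => if i == k' then 'X else (var k' i)%:P
  end.
Lemma ev_var k i : (i < k)%N -> ev k (var k i) = v i.
Proof.
elim: k => [//|k ih] hi /=; case: eqP => [->|ne]; first by rewrite horner_morphX.
rewrite horner_morphC ih //; move: hi; rewrite ltnS leq_eqVlt => /orP [/eqP //|//].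
Qed.
Lemma ev_img (X : R -> Prop) : X 1 -> (forall x y, X x -> X y -> X (x - y)) ->
  (forall x y, X x -> X y -> X (x * y)) -> (forall i, X (v i)) -> forall k (P : MP k), X (ev k P).
Proof.
move=> h1 hB hM hv.
have h0 : X 0 by rewrite -(subrr 1); apply: (hB).
have hD : forall x y, X x -> X y -> X (x + y).
  move=> x y hx hy; have -> : x + y = x - (0 - y) by rewrite sub0r opprK.
  by apply: (hB) => //; apply: (hB).
elim=> [|k ih] P /=.
  have hn : forall n : nat, X (1 *+ n) by elim=> [|m ihm]; rewrite ?mulr0n ?mulrS //; apply: (hD).
  by case: P => n; rewrite ?NegzE ?mulrNz; [apply: (hn) | rewrite -sub0r; apply: (hB) => //; apply: (hn)].
rewrite /horner_morph horner_coef; apply: big_ind => //; move=> i _.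
apply: (hM); first by rewrite coef_map; apply: (ih).
by elim: (nat_of_ord i) => [|m ihm]; rewrite ?expr0 ?exprS //; apply: (hM).
Qed.
End Ev.

Section FG.
Variable A : sesquiad.
Variable R : comPzRingType.
Variable phi : A -> R.
Hypothesis phi_inj : injective phi.
Hypothesis phiM : forall x y, phi (sq_mul x y) = phi x * phi y.
Hypothesis phi1 : phi (sq_one A) = 1.
Hypothesis phi0 : phi (sq_zero A) = 0.
Hypothesis phiS : forall l b, sq_sum l b <-> \sum_(p <- l) (phi p.2 *~ p.1) = phi b.
Variable n : nat.
Variable f : free_car n -> A.
Hypothesis hf : is_morph_raw (@free_mul n) (free_one n) (free_zero n) (@free_sum n)
                 (@sq_mul A) (sq_one A) (sq_zero A) (@sq_sum A) f.
Hypothesis fsurj : forall a : A, exists x, f x = a.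

Lemma cong_refl (C : rel A) x : is_congruence C -> C x x.
Proof. by move=> [Q [pi [_ _ ker]]]; apply/ker. Qed.

Definition delta (k : nat) : {ffun 'I_n -> nat} := [ffun j : 'I_n => ((nat_of_ord j == k) : nat)].

Lemma fg_acc : acc_congruences A.
Proof.
have [fM f1 f0 fS] := hf.
case: (eqVneq (1:R) 0) => h10.
  have triv : forall a : A, a = sq_zero A.
    by move=> a; apply: phi_inj; rewrite phi0 -(mulr1 (phi a)) h10 mulr0.
  move=> C hC _; exists 0%N => m _ x y; rewrite (triv x) (triv y).
  by split => _; apply: cong_refl.
pose R' := nzR' h10.
pose v (k : nat) : R' := if (k < n)%N then phi (f (Some (delta k))) else 0.
pose E := ev v n.
have hS : forall P, SA phi (E P).
  move=> P; refine (@ev_img R' v (SA phi) _ _ _ _ n P).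
  - exact: (SA1 phi1).
  - by move=> x y; apply: SAB.
  - by move=> x y; apply: (SAM phiM).
  - by move=> i; rewrite /v; case: ifP => _; [apply: SA_phi | apply: sp0].
have base : forall e : {ffun 'I_n -> nat}, ~ (exists i, 0 < e i)%N -> exists P, E P = phi (f (Some e)).
  move=> e hno; have -> : e = [ffun => 0%N].
    by apply/ffunP => i; rewrite ffunE; apply/eqP; rewrite -leqn0 leqNgt; apply/negP => h; apply: hno; exists i.
  by exists 1; rewrite rmorph1 -[Some _]/(free_one n) f1 phi1.
have hmono : forall s (e : {ffun 'I_n -> nat}), (\sum_i e i <= s)%N -> exists P, E P = phi (f (Some e)).
  elim=> [|s ih] e hs; case: (classic (exists i, 0 < e i)%N) => [[i0 hi0]|hno]; try exact: base.
    exfalso; move: hs; rewrite leqn0 sum_nat_eq0 => /forallP /(_ i0) /eqP e0.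
    by rewrite e0 in hi0.
  pose e' := [ffun j => e j - ((j == i0) : nat)]%N.
  have lt : (\sum_i e' i < \sum_i e i)%N.
    rewrite (bigD1 i0) //= [X in (_ < X)%N](bigD1 i0) //= ffunE eqxx.
    have -> : (\sum_(i < n | i != i0) e' i = \sum_(i < n | i != i0) e i)%N.
      by apply: eq_bigr => j /negbTE ne; rewrite ffunE ne subn0.
    by rewrite ltn_add2r subn1 prednK.
  have hs' : (\sum_i e' i <= s)%N by rewrite -ltnS; exact: leq_trans lt hs.
  have [P' eP'] := ih e' hs'.
  exists (P' * var n i0); rewrite rmorphM eP' ev_var // /v ltn_ord.
  rewrite -phiM -fM /=; congr (phi (f (Some _))); apply/ffunP => j; rewrite !ffunE.
  case: eqP => [->|ne]; first by rewrite eqxx subnK.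
  have -> : (nat_of_ord j == nat_of_ord i0) = false by apply/negbTE/eqP => h; apply: ne; apply: val_inj.
  by rewrite subn0 addn0.
have hV : forall a, exists P, E P = phi a.
  move=> a; have [[e|] <-] := fsurj a.
    by apply: (hmono (\sum_i e i)%N).
  by exists 0; rewrite rmorph0 -[None]/(free_zero n) f0 phi0.
move=> C hC hm.
pose J k (P : MP n) := Igen phi (C k) (E P).
have hJ : forall k, ideal (J k).
  move=> k; split.
  - by rewrite /J rmorph0; apply: sp0.
  - by move=> x y hx hy; rewrite /J rmorphD; apply: spadd.
  - by move=> x y hy; rewrite /J rmorphM; apply: (IgenM phiM).
have [N hN] := racc_MP hJ (fun k x h => Igen_mono (fun a b => hm k a b) h).
exists N => m hmN x y; split; last exact: chain_mono.
move=> hxy; have [Px ePx] := hV x; have [Py ePy] := hV y.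
have : J m (Px - Py) by rewrite /J rmorphB ePx ePy; exact: (CG_ext phi1 hxy).
move/(hN m hmN); rewrite /J rmorphB ePx ePy; exact: (key phiM phiS).
Qed.
End FG.

Lemma fg_noeth (A : sesquiad) : fg_sesquiad A -> noetherian A.
Proof.
move=> [n [f [hf hs]]]; case: (sq_ax A) => _ _ _ _ [R [phi [pinj pM p1 p0 pS]]].
apply/noeth_iff; exact: (fg_acc pinj pM p1 p0 pS hf hs).
Qed.

Lemma spec_part (A : sesquiad) : noetherian A -> spec_noetherian A.
Proof.
move=> /noeth_iff hacc; case: (sq_ax A) => _ _ _ _ [R [phi [pinj pM p1 p0 pS]]].
exact: (noeth_spec pM p1 p0 pS hacc).
Qed.

Local Close Scope ring_scope.

Theorem mainTheorem12 (A : sesquiad) :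
  (noetherian A <-> acc_congruences A) /\
  (forall (B : sesquiad) (phi : A -> B),
      noetherian A -> is_sq_morph phi -> (forall b : B, exists a, phi a = b) ->
      noetherian B) /\
  (fg_sesquiad A -> noetherian A) /\
  (noetherian A -> spec_noetherian A).
Proof.
split; first exact: noeth_iff.
split; first by move=> B phi; apply: image_noeth.
split; [exact: fg_noeth | exact: spec_part].
Qed.
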